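(* Let $n>1$ be odd and $D_{2n}=\langle s,t\mid s^2=t^n=1,\ sts=t^{-1}\rangle$. Let $(u_i)_{i\in[1,m]}$ be a system of equations over $D_{2n}$, each $u_i$ a word over the constants $s,t,t^{-1}$ and variables $X_1^{\pm1},\dots,X_k^{\pm1}$. Let $w_i$ be the word obtained from $u_i$ by replacing each $X_j$ by $Y_{0,j}(Y_{1,j}tY_{1,j}^{-1})(Y_{2,j}tY_{2,j}^{-1})\cdots(Y_{n,j}tY_{n,j}^{-1})$ and each $X_j^{-1}$ by the formal inverse of that word, and then replacing $s,t,t^{\pm1}$ by letters $a,d,d^{\pm1}$ and each $Y_{i,j}^{\pm1}$ by $g_{i,j}^{\pm1}$. Let $G_o$ be the group with generators $a,d$ and $g_{i,j}$ ($i\in[0,n]$, $j\in[1,k]$) and relators $a^2$, $d^n$, $adad$, $w_i$ ($i\in[1,m]$), $[g,g']$, $[g,a]$, $g^2$ for all $g,g'\in\{g_{i,j}\}$. Then there is a surjective homomorphism $G_o\to D_{2n}$ if and only if the system $(u_i)_{i\in[1,m]}$ has a solution in $D_{2n}$.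
   Context: A solution of a system of equations over a group is an assignment of group elements $h_j$ to the variables $X_j$ (and $h_j^{-1}$ to $X_j^{-1}$) under which every equation evaluates to the identity. $[x,y]=xyx^{-1}y^{-1}$. *)

(* Defs.v *)
From mathcomp Require Import all_boot all_fingroup all_solvable.
From Stdlib Require List.
Set Implicit Arguments. Unset Strict Implicit. Unset Printing Implicit Defensive.
Import GroupScope.
Local Open Scope group_scope.

(* A (free-group) word over an alphabet L is a list of letters with signs:
   (x, false) stands for x, (x, true) for x^-1. *)
Definition word (L : Type) := seq (L * bool).

Definition eval_word (L : Type) (gT : finGroupType) (f : L -> gT) (w : word L) : gT :=
  \prod_(p <- w) (if p.2 then (f p.1)^-1 else f p.1).

Definition inv_word (L : Type) (w : word L) : word L :=
  rev [seq (p.1, ~~ p.2) | p <- w].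

(* Letters of the equations u_i over D_{2n}: constants s, t, t^-1 and
   variables X_j^{+-1} (j in [1,k], indexed by 'I_k; bool = inverse). *)
Inductive ulet (k : nat) : Type :=
| U_s | U_t | U_tinv | U_X of 'I_k & bool.
Arguments U_s {k}. Arguments U_t {k}. Arguments U_tinv {k}.

Definition eval_u (gT : finGroupType) (k : nat) (s t : gT) (h : 'I_k -> gT)
  (u : seq (ulet k)) : gT :=
  \prod_(x <- u) match x with
                 | U_s => s | U_t => t | U_tinv => t^-1
                 | U_X j b => if b then (h j)^-1 else h j end.

Definition is_solution (gT : finGroupType) (k m : nat) (s t : gT)
  (u : 'I_m -> seq (ulet k)) (h : 'I_k -> gT) : Prop :=
  forall i, eval_u s t h (u i) = 1.

(* Generators of G_o: a, d and g_{i,j}, i in [0,n] ('I_n.+1), j in [1,k] ('I_k). *)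
Inductive glet (n k : nat) : Type :=
| G_a | G_d | G_g of 'I_n.+1 & 'I_k.
Arguments G_a {n k}. Arguments G_d {n k}.

Definition X_image (n k : nat) (j : 'I_k) : word (glet n k) :=
  (G_g ord0 j, false) ::
  flatten [seq [:: (G_g (inord i) j, false); (G_d, false); (G_g (inord i) j, true)]
          | i <- iota 1 n].

Definition translate_letter (n k : nat) (x : ulet k) : word (glet n k) :=
  match x with
  | U_s => [:: (G_a, false)]
  | U_t => [:: (G_d, false)]
  | U_tinv => [:: (G_d, true)]
  | U_X j false => X_image n j
  | U_X j true => inv_word (X_image n j)
  end.

Definition translate (n k : nat) (u : seq (ulet k)) : word (glet n k) :=
  flatten [seq translate_letter n x | x <- u].

Definition Go_relators (n k m : nat) (u : 'I_m -> seq (ulet k)) : seq (word (glet n k)) :=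
  [:: [:: (G_a, false); (G_a, false)];
      nseq n (G_d, false);
      [:: (G_a, false); (G_d, false); (G_a, false); (G_d, false)]]
  ++ [seq translate n (u i) | i <- enum 'I_m]
  ++ [seq [:: (G_g p.1.1 p.1.2, false); (G_g p.2.1 p.2.2, false);
              (G_g p.1.1 p.1.2, true); (G_g p.2.1 p.2.2, true)]
     | p <- enum {: ('I_n.+1 * 'I_k) * ('I_n.+1 * 'I_k) }]
  ++ [seq [:: (G_g p.1 p.2, false); (G_a, false); (G_g p.1 p.2, true); (G_a, true)]
     | p <- enum {: 'I_n.+1 * 'I_k }]
  ++ [seq [:: (G_g p.1 p.2, false); (G_g p.1 p.2, false)]
     | p <- enum {: 'I_n.+1 * 'I_k }].

(* A homomorphism from the finitely presented group G_o = <gens | relators>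
   to a group gT is (by the universal property of presentations) the same as
   an assignment f of the generators killing every relator; it is surjective
   onto a group H iff the images of the generators generate H. *)
Definition Go_hom (gT : finGroupType) (n k m : nat) (u : 'I_m -> seq (ulet k))
  (f : glet n k -> gT) : Prop :=
  forall r, List.In r (Go_relators n u) -> eval_word f r = 1.

Definition Go_gens (n k : nat) : seq (glet n k) :=
  G_a :: G_d :: [seq G_g p.1 p.2 | p <- enum {: 'I_n.+1 * 'I_k }].

Definition Go_surj (gT : finGroupType) (n k m : nat) (u : 'I_m -> seq (ulet k))
  (H : {set gT}) : Prop :=
  exists f : glet n k -> gT,
    Go_hom u f /\ (forall x, f x \in H) /\ <<[set y in map f (Go_gens n k)]>> = H.

(* Main.v *)
Require Import Defs.
From mathcomp Require Import all_boot all_fingroup all_solvable.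
From mathcomp Require Import zify.
Import GroupScope.
Local Open Scope group_scope.
Set Implicit Arguments. Unset Strict Implicit. Unset Printing Implicit Defensive.

Section Gen.
Variables (gT : finGroupType) (n : nat).
Hypotheses (n_gt1 : 1 < n) (odd_n : odd n).

Definition th (x y : gT) (i e : nat) := x ^+ i * y ^+ e.

Lemma inv2 (y : gT) : y ^+ 2 = 1 -> y^-1 = y.
Proof. by move=> y2; rewrite -[LHS]mulg1 -y2 expgS expg1 mulKg. Qed.

Lemma powodd (y : gT) e : y ^+ 2 = 1 -> y ^+ e = y ^+ (odd e).
Proof. by move=> y2; rewrite -(expg_mod e y2) modn2. Qed.

Lemma xpred (x : gT) : x ^+ n = 1 -> x ^+ n.-1 = x^-1.
Proof.
move=> xn; apply/eqP; rewrite eq_sym eq_invg_mul -expgS prednK ?xn //; lia.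
Qed.

Variables (x y : gT).
Hypotheses (y2 : y ^+ 2 = 1) (xn : x ^+ n = 1) (yxy : y * x * y = x^-1).

Lemma yxj j e : y ^+ e * x ^+ j = x ^+ (j * (if odd e then n.-1 else 1%N)) * y ^+ e.
Proof.
rewrite (powodd e y2); case: (odd e) => /=; last by rewrite muln1 expg0 mulg1 mul1g.
rewrite expg1 mulnC expgM xpred //.
have -> : x^-1 = x ^ y by rewrite /conjg (inv2 y2) mulgA yxy.
have yy : y * y = 1 by rewrite -y2 expgS expg1.
by rewrite -conjXg /conjg (inv2 y2) -!mulgA yy mulg1.
Qed.

Lemma th_mul i e j f : th x y i e * th x y j f = th x y (i + j * (if odd e then n.-1 else 1%N)) (e + f).
Proof.
by rewrite /th mulgA -(mulgA _ (y ^+ e)) yxj !mulgA -expgD -mulgA -expgD.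
Qed.

Lemma th_red i e : th x y i e = th x y (i %% n) (odd e).
Proof. by rewrite /th (expg_mod i xn) -powodd. Qed.


Hypothesis cardT : #|[set: gT]| = n.*2.
Hypothesis genxy : <<[set x; y]>> = [set: gT].

Definition thp (p : 'I_n * bool) := th x y p.1 p.2.

Let n_gt0 : 0 < n. Proof. exact: ltnW. Qed.

Let S := thp @: [set: 'I_n * bool].

Let gS : group_set S.
Proof.
apply/group_setP; split.
  apply/imsetP; exists (Ordinal n_gt0, false) => //.
  by rewrite /thp /th /= !expg0 mulg1.
move=> _ _ /imsetP[p _ ->] /imsetP[q _ ->].
rewrite /thp th_mul th_red; apply/imsetP.
by exists (Ordinal (ltn_pmod (p.1 + q.1 * (if odd p.2 then n.-1 else 1%N)) n_gt0), odd (p.2 + q.2)).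
Qed.

Let TS : [set: gT] \subset S.
Proof.
rewrite -genxy (gen_subG _ (Group gS)) subUset !sub1set; apply/andP; split.
  apply/imsetP; exists (Ordinal n_gt1, false) => //.
  by rewrite /thp /th /= expg1 expg0 mulg1.
apply/imsetP; exists (Ordinal n_gt0, true) => //.
by rewrite /thp /th /= expg1 expg0 mul1g.
Qed.

Lemma thp_surj z : exists p, thp p = z.
Proof.
have : z \in S by apply: (subsetP TS); rewrite in_setT.
by case/imsetP=> p _ ->; exists p.
Qed.

Lemma thp_inj : injective thp.
Proof.
have /imset_injP H : #|S| == #|[set: 'I_n * bool]|.
  rewrite eqn_leq leq_imset_card /=.
  have := subset_leq_card TS.
  by rewrite cardT cardsT card_prod card_ord card_bool -mul2n mulnC.
by move=> p q; apply: H; rewrite in_setT.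
Qed.

End Gen.

Section Phi.
Variables (gT : finGroupType) (n : nat).
Hypotheses (n_gt1 : 1 < n) (odd_n : odd n).
Hypothesis cardT : #|[set: gT]| = n.*2.
Variables (x y x2 y2 : gT).
Hypotheses (yy : y ^+ 2 = 1) (xn : x ^+ n = 1) (yxy : y * x * y = x^-1).
Hypothesis genxy : <<[set x; y]>> = [set: gT].
Hypotheses (yy2 : y2 ^+ 2 = 1) (xn2 : x2 ^+ n = 1) (yxy2 : y2 * x2 * y2 = x2^-1).

Let n_gt0 : 0 < n. Proof. exact: ltnW. Qed.

Definition phi z := if [pick p | thp (n:=n) x y p == z] is Some p then th x2 y2 p.1 p.2 else 1.

Lemma phi_th i e : phi (th x y i e) = th x2 y2 i e.
Proof.
pose p0 : 'I_n * bool := (Ordinal (ltn_pmod i n_gt0), odd e).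
have E : th x y i e = thp x y p0 by rewrite /thp /= -th_red.
rewrite /phi; case: pickP => [p /eqP Hp | H].
  have -> : p = p0 by apply: (thp_inj n_gt1 odd_n yy xn yxy cardT genxy); rewrite Hp.
  by rewrite /= -th_red.
by have := H p0; rewrite E eqxx.
Qed.

Lemma phiM z1 z2 : phi (z1 * z2) = phi z1 * phi z2.
Proof.
have [p1 <-] := thp_surj n_gt1 odd_n yy xn yxy genxy z1.
have [p2 <-] := thp_surj n_gt1 odd_n yy xn yxy genxy z2.
by rewrite /thp (th_mul n_gt1 odd_n yy xn yxy) !phi_th (th_mul n_gt1 odd_n yy2 xn2 yxy2).
Qed.

Lemma phi1 : phi 1 = 1.
Proof. by have := phi_th 0 0; rewrite /th !expg0 mulg1. Qed.

Lemma phiV z : phi z^-1 = (phi z)^-1.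
Proof. by apply/eqP; rewrite eq_sym eq_invg_mul -phiM mulgV phi1. Qed.

Lemma phix : phi x = x2.
Proof. by have := phi_th 1 0; rewrite /th !expg0 !mulg1 !expg1. Qed.

Lemma phiy : phi y = y2.
Proof. by have := phi_th 0 1; rewrite /th !expg0 !mul1g !expg1. Qed.

End Phi.

Lemma eval_word_cons (L : Type) (gT : finGroupType) (f : L -> gT) p w :
  eval_word f (p :: w) = (if p.2 then (f p.1)^-1 else f p.1) * eval_word f w.
Proof. by rewrite /eval_word big_cons. Qed.

Lemma eval_word_nil (L : Type) (gT : finGroupType) (f : L -> gT) :
  eval_word f [::] = 1.
Proof. by rewrite /eval_word big_nil. Qed.

Lemma eval_word_cat (L : Type) (gT : finGroupType) (f : L -> gT) w1 w2 :
  eval_word f (w1 ++ w2) = eval_word f w1 * eval_word f w2.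
Proof. by rewrite /eval_word big_cat. Qed.

Lemma eval_word_inv (L : Type) (gT : finGroupType) (f : L -> gT) w :
  eval_word f (inv_word w) = (eval_word f w)^-1.
Proof.
elim: w => [|p w IH]; first by rewrite /inv_word /= eval_word_nil invg1.
rewrite /inv_word map_cons rev_cons -cats1 eval_word_cat -/(inv_word w) IH.
rewrite eval_word_cons eval_word_cons eval_word_nil mulg1 invMg /=.
by case: p.2 => //; rewrite invgK.
Qed.

Lemma eval_word_nseq (L : Type) (gT : finGroupType) (f : L -> gT) l m :
  eval_word f (nseq m (l, false)) = f l ^+ m.
Proof.
elim: m => [|m IH]; first by rewrite eval_word_nil expg0.
by rewrite /= eval_word_cons IH expgS.
Qed.

Lemma eval_translate (gT : finGroupType) n k (f : glet n k -> gT) u :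
  eval_word f (translate n u) =
  eval_u (f G_a) (f G_d) (fun j => eval_word f (X_image n j)) u.
Proof.
rewrite /translate /eval_word big_flatten big_map /eval_u.
apply: eq_bigr => x _; rewrite -/(eval_word f _).
case: x => [| | |j []] /=; rewrite ?eval_word_inv //;
  by rewrite eval_word_cons eval_word_nil mulg1.
Qed.

Lemma eval_u_morph (gT : finGroupType) k (F : gT -> gT) s t (h : 'I_k -> gT) u :
  F 1 = 1 -> (forall a b, F (a * b) = F a * F b) -> (forall a, F a^-1 = (F a)^-1) ->
  F (eval_u s t h u) = eval_u (F s) (F t) (fun j => F (h j)) u.
Proof.
move=> F1 FM FV; elim: u => [|x u IH]; first by rewrite /eval_u !big_nil.
rewrite /eval_u !big_cons FM -/(eval_u _ _ _ _) IH; congr (_ * _).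
by case: x => [| | |j []].
Qed.

Lemma In_mem (T : eqType) (x : T) s : x \in s -> List.In x s.
Proof.
elim: s => [//|y s IH]; rewrite in_cons; case/orP=> [/eqP->|H]; first by left.
by right; apply: IH.
Qed.

Lemma order2 (gT : finGroupType) (x : gT) : x ^+ 2 = 1 -> x != 1 -> #[x] = 2.
Proof.
move=> x2 x1; have : #[x] %| 2 by rewrite order_dvdn x2.
move=> /(dvdn_leq (isT : 0 < 2)) H; have := order_gt0 x.
move: x1; rewrite -order_eq1; lia.
Qed.

Lemma klein (gT : finGroupType) (x y : gT) :
  x ^+ 2 = 1 -> y ^+ 2 = 1 -> commute x y -> x != 1 -> y != 1 -> x != y ->
  4 %| #|[set: gT]|.
Proof.
move=> x2 y2 cxy x1 y1 xy.
have ox := order2 x2 x1; have oy := order2 y2 y1.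
have nxy : ~~ (<[x]> \subset <[y]>).
  rewrite cycle_subG; apply/negP => /cycleP[k xk].
  move: xy x1; rewrite xk -(expg_mod k y2) modn2; case: (odd k) => /=.
    by rewrite expg1 eqxx.
  by rewrite expg0 eqxx.
have TI := prime_TIg (G := <[x]>%G) (H := <[y]>%G).
rewrite -/#[x] ox in TI; have {}TI := TI isT nxy.
have := TI_cardMg TI; rewrite -/#[x] -/#[y] ox oy => c4.
rewrite -(cent_joinEl (cents_cycle cxy)) in c4.
by rewrite (_ : 4 = 2 * 2)%N // -c4; apply: cardSg; apply: subsetT.
Qed.

Lemma prod_iota_const (gT : finGroupType) (x : gT) m l :
  \prod_(i <- iota m l) x = x ^+ l.
Proof.
elim: l m => [|l IH] m; first by rewrite big_nil expg0.
by rewrite /= big_cons IH expgS.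
Qed.

Lemma prod_split (gT : finGroupType) (a b : gT) p N : p <= N ->
  \prod_(i <- iota 1 N) (if i <= p then a else b) = a ^+ p * b ^+ (N - p).
Proof.
move=> pN; rewrite -{1}(subnKC pN) iotaD big_cat /=.
rewrite (eq_big_seq (fun=> a)); last first.
  by move=> i; rewrite mem_iota => /andP[_ H]; rewrite -ltnS -add1n H.
rewrite [X in _ * X](eq_big_seq (fun=> b)); last first.
  by move=> i; rewrite mem_iota => /andP[H _]; rewrite leqNgt -add1n H.
by rewrite !prod_iota_const.
Qed.

Lemma comm_of (gT : finGroupType) (x y : gT) :
  x * (y * (x^-1 * (y^-1 * 1))) = 1 -> commute x y.
Proof.
rewrite mulg1 !mulgA => H; apply/eqP; rewrite eq_mulgV1 invMg !mulgA H.
by [].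
Qed.

Lemma arith n C : 1 < n -> odd n -> C < n ->
  let P := if odd C then (n - C)./2 else n - C./2 in
  P <= n /\ (n - P) %% n = (P + C) %% n.
Proof.
move=> n1 on Cn P; rewrite /P; have := odd_double_half C.
case oC: (odd C) => /= HC.
  have := odd_double_half (n - C); rewrite oddB ?(ltnW Cn) // on oC /= => H.
  split; first lia.
  by congr (_ %% _); lia.
split; first lia.
have -> : (n - C./2 + C = n + (n - (n - C./2)))%N by lia.
by rewrite modnDl.
Qed.


Lemma In_catl (T : Type) (x : T) s1 s2 : List.In x s1 -> List.In x (s1 ++ s2).
Proof. elim: s1 => //= y s IH [->|H]; [by left | by right; apply: IH]. Qed.
Lemma In_catr (T : Type) (x : T) s1 s2 : List.In x s2 -> List.In x (s1 ++ s2).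
Proof. by elim: s1 => //= y s IH H; right; apply: IH. Qed.
Lemma In_map (T U : Type) (f : T -> U) s x : List.In x s -> List.In (f x) (map f s).
Proof. elim: s => //= y s IH [->|H]; [by left | by right; apply: IH]. Qed.
Lemma In_map' (T U : Type) (f : T -> U) s x y : List.In x s -> y = f x -> List.In y (map f s).
Proof. by move=> H ->; apply: In_map. Qed.
Lemma In_catP (T : Type) (x : T) s1 s2 : List.In x (s1 ++ s2) -> List.In x s1 \/ List.In x s2.
Proof. elim: s1 => //= [|y s IH [->|/IH[]]]; [by right | by left; left | by left; right | by right]. Qed.
Lemma In_mapP (T U : Type) (f : T -> U) s y : List.In y (map f s) -> exists x, f x = y /\ List.In x s.
Proof.
elim: s => //= z s IH [<-|/IH[x [<- H]]]; [by exists z; split; [|left] | by exists x; split; [|right]].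
Qed.

Section Main.
Variables (n k m : nat) (u : 'I_m -> seq (ulet k)).

Lemma In_r1 : List.In [:: (@G_a n k, false); (G_a, false)] (Go_relators n u).
Proof. rewrite /Go_relators; by apply: In_catl; left. Qed.
Lemma In_r2 : List.In (nseq n (@G_d n k, false)) (Go_relators n u).
Proof. rewrite /Go_relators; by apply: In_catl; right; left. Qed.
Lemma In_r3 : List.In [:: (@G_a n k, false); (G_d, false); (G_a, false); (G_d, false)] (Go_relators n u).
Proof. rewrite /Go_relators; by apply: In_catl; right; right; left. Qed.
Lemma In_w i : List.In (translate n (u i)) (Go_relators n u).
Proof.
rewrite /Go_relators; apply: In_catr; apply: In_catl.
by apply: (In_map (fun i => translate n (u i))); apply: In_mem; rewrite mem_enum.
Qed.
Lemma In_gg i j i' j' : List.In [:: (@G_g n k i j, false); (G_g i' j', false);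
              (G_g i j, true); (G_g i' j', true)] (Go_relators n u).
Proof.
rewrite /Go_relators; apply: In_catr; apply: In_catr; apply: In_catl.
apply: (In_map' (x := ((i, j), (i', j')))); last by [].
by apply: In_mem; rewrite mem_enum.
Qed.
Lemma In_ga i j : List.In [:: (@G_g n k i j, false); (G_a, false); (G_g i j, true); (G_a, true)] (Go_relators n u).
Proof.
rewrite /Go_relators; apply: In_catr; apply: In_catr; apply: In_catr.
apply: In_catl.
apply: (In_map' (x := (i, j))); last by [].
by apply: In_mem; rewrite mem_enum.
Qed.
Lemma In_g2 i j : List.In [:: (@G_g n k i j, false); (G_g i j, false)] (Go_relators n u).
Proof.
rewrite /Go_relators; apply: In_catr; apply: In_catr; apply: In_catr.
apply: In_catr.
apply: (In_map' (x := (i, j))); last by [].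
by apply: In_mem; rewrite mem_enum.
Qed.
End Main.

Lemma eq_eval_u (gT : finGroupType) k (s t : gT) (h1 h2 : 'I_k -> gT) u :
  (forall j, h1 j = h2 j) -> eval_u s t h1 u = eval_u s t h2 u.
Proof. by move=> H; apply: eq_bigr => x _; case: x => [| | |j []]; rewrite ?H. Qed.

Lemma comm_to (gT : finGroupType) (x y : gT) :
  commute x y -> x * (y * (x^-1 * (y^-1 * 1))) = 1.
Proof. by move=> cxy; rewrite mulg1 !mulgA cxy mulgK mulgV. Qed.

Theorem lemma7p10 (n k m : nat) (s t : 'D_(n.*2)) (u : 'I_m -> seq (ulet k)) :
  1 < n -> odd n ->
  s ^+ 2 = 1 -> t ^+ n = 1 -> s * t * s = t^-1 ->
  <<[set s; t]>> = [set: 'D_(n.*2)] ->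
  Go_surj n u [set: 'D_(n.*2)] <->
  exists h : 'I_k -> 'D_(n.*2), is_solution s t u h.
Proof.
move=> n1 on s2 tn sts gen.
have cardD : #|[set: 'D_(n.*2)]| = n.*2 := card_dihedral n1.
have gents : <<[set t; s]>> = [set: 'D_(n.*2)] by rewrite setUC.
have tinj := thp_inj n1 on s2 tn sts cardD gents.
have tsurj := thp_surj n1 on s2 tn sts gents.
have ss : s * s = 1 by rewrite -s2 expgS expg1.
have sV : s^-1 = s := inv2 s2.
have oddone : forall z : 'D_(n.*2), z * z = 1 -> z ^+ n = 1 -> z = 1.
  move=> z zz zn; have z2 : z ^+ 2 = 1 by rewrite expgS expg1.
  by have := expg_mod n z2; rewrite modn2 on expg1 zn.
have t1 : t != 1.
  apply/eqP => t1; have := tinj (Ordinal n1, false) (Ordinal (ltnW n1), false).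
  rewrite /thp /th /= expg1 !expg0 t1 mulg1 => /(_ erefl) /(congr1 (fun p => nat_of_ord p.1)).
  by [].
split.
- case=> f [hom [_ genf]].
  have R1 := hom _ (@In_r1 n k m u); have R2 := hom _ (@In_r2 n k m u); have R3 := hom _ (@In_r3 n k m u).
  rewrite /eval_word !big_cons big_nil /= !mulg1 in R1 R3.
  rewrite eval_word_nseq in R2.
  have G2 i j : f (G_g i j) ^+ 2 = 1.
    by have := hom _ (@In_g2 n k m u i j); rewrite /eval_word !big_cons big_nil /= mulg1 expgS expg1.
  have Ga i j : commute (f (G_g i j)) (f G_a).
    by apply: comm_of; have := hom _ (@In_ga n k m u i j); rewrite /eval_word !big_cons big_nil.
  have Gg i j i' j' : commute (f (G_g i j)) (f (G_g i' j')).
    by apply: comm_of; have := hom _ (@In_gg n k m u i j i' j'); rewrite /eval_word !big_cons big_nil.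
  have a2 : f G_a ^+ 2 = 1 by rewrite expgS expg1.
  have ada : f G_a * f G_d * f G_a = (f G_d)^-1.
    by apply/eqP; rewrite eq_mulgV1 invgK -!mulgA R3.
  have memG y : y \in [set y in map f (Go_gens n k)] ->
     [\/ y = f G_a, y = f G_d | exists i j, y = f (G_g i j)].
    rewrite inE /Go_gens /= -map_comp !in_cons => /or3P[/eqP->|/eqP->|/mapP[[i j] _ ->]].
    + by constructor 1.
    + by constructor 2.
    + by constructor 3; exists i, j.
  case: (eqVneq (f G_a) 1) => [a1 | an1].
  + exfalso.
    have dd : f G_d * f G_d = 1 by move: R3; rewrite a1 !mul1g.
    have d1 : f G_d = 1 := oddone _ dd R2.
    have ab : abelian [set y in map f (Go_gens n k)].
      apply/centsP => y /memG Hy z /memG Hz.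
      case: Hy => [->|->|[i [j ->]]]; case: Hz => [->|->|[i' [j' ->]]];
        rewrite ?a1 ?d1; try exact: commute1; try exact: (commute_sym (commute1 _)).
      exact: Gg.
    have := abelian_gen [set y in map f (Go_gens n k)]; rewrite ab genf => abT.
    have cst : commute s t := (centsP abT) s (in_setT s) t (in_setT t).
    have tt : t * t = 1.
      have : t^-1 = t by rewrite -sts cst -mulgA ss mulg1.
      by move=> tV; rewrite -{1}tV mulVg.
    by move: t1; rewrite (oddone _ tt tn) eqxx.
  + have gin i j : f (G_g i j) = 1 \/ f (G_g i j) = f G_a.
      case: (eqVneq (f (G_g i j)) 1) => [->|x1]; [by left|right].
      apply/eqP; apply/negPn/negP => xa.
      have := klein (G2 i j) a2 (Ga i j) x1 an1 xa.
      rewrite cardD -mul2n (_ : 4 = 2 * 2)%N // dvdn_pmul2l // dvdn2 on.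
      by [].
    have gen2 : <<[set f G_d; f G_a]>> = [set: 'D_(n.*2)].
      apply/eqP; rewrite eqEsubset subsetT /= -genf gen_subG; apply/subsetP => y /memG.
      case=> [->|->|[i [j ->]]]; try by apply: mem_gen; rewrite !inE eqxx ?orbT.
      by case: (gin i j) => ->; [exact: group1 | apply: mem_gen; rewrite !inE eqxx ?orbT].
    pose F := phi n (f G_d) (f G_a) t s.
    have FM := phiM n1 on cardD a2 R2 ada gen2 s2 tn sts.
    have F1 : F 1 = 1 := phi1 n1 on cardD a2 R2 ada gen2 s2 tn.
    have FV := phiV n1 on cardD a2 R2 ada gen2 s2 tn sts.
    have Fd : F (f G_d) = t := phix n1 on cardD a2 R2 ada gen2 s2 tn.
    have Fa : F (f G_a) = s := phiy n1 on cardD a2 R2 ada gen2 s2 tn.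
    exists (fun j => F (eval_word f (X_image n j))) => i.
    have E := eval_u_morph (F := F) (f G_a) (f G_d) (fun j => eval_word f (X_image n j)) (u i) F1 FM FV.
    rewrite Fa Fd in E.
    by rewrite -E -eval_translate hom ?F1 //; apply: (@In_w n k m u).
- case=> h sol.
  have dec j : exists p : nat * nat, p.2 < n /\ h j = s ^+ p.1 * t ^+ p.2.
    have [[i b] E] := tsurj (h j)^-1.
    exists (nat_of_bool b, (n.-1 * i) %% n); split; first exact: ltn_pmod (ltnW n1).
    rewrite /= (expg_mod _ tn) expgM (xpred n1 on tn) expVgn.
    rewrite -[h j]invgK -E /thp /th /= invMg.
    by rewrite -[s ^- b]expVgn sV.
  have [ep Hep] := fin_all_exists dec.
  pose E j := (ep j).1; pose C j := (ep j).2.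
  pose P j := if odd (C j) then (n - C j)./2 else n - (C j)./2.
  pose kk (i : 'I_n.+1) j : nat := if (i == 0 :> nat) then E j else nat_of_bool (i <= P j).
  pose f (l : glet n k) : 'D_(n.*2) :=
    match l with G_a => s | G_d => t | G_g i j => s ^+ kk i j end.
  have Xim j : eval_word f (X_image n j) = h j.
    rewrite /X_image eval_word_cons /=.
    rewrite /eval_word big_flatten big_map.
    rewrite (eq_big_seq (fun i => if i <= P j then t^-1 else t)); last first.
      move=> i; rewrite mem_iota => /andP[i1 i2].
      rewrite !big_cons big_nil /= /kk inordK; last by lia.
      rewrite (negbTE (lt0n_neq0 i1)).
      case: (i <= P j) => /=; rewrite ?expg1 ?expg0 ?invg1 ?mul1g ?mulg1 //.
      by rewrite sV mulgA sts.
    have [Pn Pmod] := arith n1 on (proj1 (Hep j)).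
    rewrite prod_split // (proj2 (Hep j)) -(expg_mod (n - P j) tn) Pmod (expg_mod _ tn).
    by rewrite -/(P j) expgD expVgn [X in _ * X = _]mulgA mulVg mul1g /kk /E.
  exists f; split; [|split].
  + move=> r Hr; rewrite /Go_relators in Hr.
    case: (In_catP Hr) => [H|{}Hr]; last case: (In_catP Hr) => [|{}Hr];
      last case: (In_catP Hr) => [|{}Hr]; last case: (In_catP Hr).
    * move: H => /= [<-|[<-|[<-|[]]]].
      - by rewrite /eval_word !big_cons big_nil /= mulg1 ss.
      - by rewrite eval_word_nseq tn.
      - by rewrite /eval_word !big_cons big_nil /= mulg1 !mulgA sts mulVg.
    * move=> H; have [i [<- _]] := In_mapP H; rewrite eval_translate /=.
      by rewrite (eq_eval_u _ _ _ Xim) sol.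
    * move=> H; have [[[i j] [i' j']] [<- _]] := In_mapP H; rewrite /eval_word !big_cons big_nil /=.
      by apply: comm_to; apply: commuteX2; apply: commute_refl.
    * move=> H; have [[i j] [<- _]] := In_mapP H; rewrite /eval_word !big_cons big_nil /=.
      by apply: comm_to; apply: commute_sym; apply: commuteX; apply: commute_refl.
    * move=> H; have [[i j] [<- _]] := In_mapP H; rewrite /eval_word !big_cons big_nil /=.
      by rewrite mulg1 -expgD addnn -[(kk i j).*2]muln2 mulnC expgM s2 expg1n.
  + by move=> x; rewrite in_setT.
  + apply/eqP; rewrite eqEsubset subsetT /= -{1}gen; apply: genS; apply/subsetP => y.
    by rewrite !inE /Go_gens /= => /orP[] ->; rewrite ?orbT.
Qed.
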